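(* Let $G$ be a $2$-connected series parallel graph which does not consist of a single edge. Then there exist vertices $s \neq t$ of $G$ such that $(G,s,t)$ is a TTSPG and \[(G,s,t) = (P_1,s,t)\,\|\,(P_2,s,t)\,\|\,(H,s,t),\] where $P_1$ and $P_2$ are paths (path subgraphs, with distinct edge sets) joining $s$ and $t$, and $H$ is a possibly empty subgraph of $G$ (empty meaning that the factor $(H,s,t)$ is absent) such that, when nonempty, $(H,s,t)$ is a TTSPG.
   Context: A graph $G=(V,E)$ has a finite vertex set $V$ and a finite multiset $E$ of unordered pairs of distinct vertices (multiple edges allowed, no loops). A path graph is a graph isomorphic to the graph with vertices $\{1,\dots,n\}$ and edges $\{i,i+1\}$, $i=1,\dots,n-1$; it joins its endpoints $1$ and $n$. A graph is $2$-connected if it is connected and deleting any single vertex (with its incident edges) leaves a connected graph. A two terminal graph (TTG) is a triple $(G,s,t)$ with $s\ne t$ vertices of $G$. The series composition is $(G_1,s_1,t_1)\circ(G_2,s_2,t_2) = (G_1\cup_{t_2\sim s_1} G_2, s_2, t_1)$ (disjoint union with $t_2$ and $s_1$ identified), and the parallel composition is $(G_1,s_1,t_1)\|(G_2,s_2,t_2) = (G_1\cup_{s_1\sim s_2,\,t_1\sim t_2}G_2, s_1,t_1)$ (disjoint union with $s_1,s_2$ identified and $t_1,t_2$ identified); parallel composition is commutative and associative. The class of two terminal series parallel graphs (TTSPGs) is the smallest class of TTGs containing $(K_2,s,t)$ (a single edge $\{s,t\}$) and closed under series and parallel composition. A graph $G$ is series parallel if $(G,s,t)$ is a TTSPG for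 some choice of $s,t$. *)

(* Defs.v *)
From mathcomp Require Import all_boot.
Set Implicit Arguments. Unset Strict Implicit. Unset Printing Implicit Defensive.

(* A finite multigraph without loops: finite vertex type, finite edge type
   (distinct elements of [edge] are distinct edges, so parallel edges are
   allowed), each edge having two distinct endpoints.  The orientation
   src/tgt is irrelevant: all notions below only use [joins], which is
   symmetric, so edges are unordered pairs. *)
Record mgraph := MGraph {
  vert : finType;
  edge : finType;
  src : edge -> vert;
  tgt : edge -> vert;
  noloop : forall e, src e != tgt e }.

Section Defs.
Variable G : mgraph.
Notation V := (vert G).
Notation E := (edge G).

Definition joins (e : E) (x y : V) : bool :=
  ((src e == x) && (tgt e == y)) || ((src e == y) && (tgt e == x)).

Definition adj_on (B : {set V}) : rel V :=
  fun x y => [&& x \in B, y \in B & [exists e, joins e x y]].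

Definition connected_on (B : {set V}) : Prop :=
  forall x y, x \in B -> y \in B -> connect (adj_on B) x y.

Definition two_connected : Prop :=
  connected_on setT /\ forall v : V, connected_on (~: [set v]).

(* Internal description of two terminal series parallel (sub)graphs of G:
   [ttspg A F s t] means that the subgraph of G with vertex set A and edge
   set F, with terminals s and t, is a TTSPG.  Series / parallel
   composition of two TTGs is realised, up to isomorphism, as the union of
   two subgraphs with disjoint edge sets that share exactly the identified
   vertices. *)
Inductive ttspg : {set V} -> {set E} -> V -> V -> Prop :=
| ttspg_edge (e : E) (s t : V) :
    joins e s t -> ttspg [set s; t] [set e] s t
| ttspg_series (A1 : {set V}) (F1 : {set E}) (s1 t1 : V)
               (A2 : {set V}) (F2 : {set E}) (s2 t2 : V) :
    ttspg A1 F1 s1 t1 -> ttspg A2 F2 s2 t2 ->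
    t2 = s1 -> A1 :&: A2 = [set s1] -> [disjoint F1 & F2] ->
    ttspg (A1 :|: A2) (F1 :|: F2) s2 t1
| ttspg_parallel (A1 : {set V}) (F1 : {set E})
                 (A2 : {set V}) (F2 : {set E}) (s t : V) :
    ttspg A1 F1 s t -> ttspg A2 F2 s t ->
    A1 :&: A2 = [set s; t] -> [disjoint F1 & F2] ->
    ttspg (A1 :|: A2) (F1 :|: F2) s t.

Definition series_parallel : Prop :=
  exists s t : V, ttspg setT setT s t.

(* The subgraph (A,F) is a path graph joining s and t: it is the image of
   the path 1 - 2 - ... - n under the bijections i |-> vs_i (vertices)
   and {i,i+1} |-> es_i (edges). *)
Definition is_path (A : {set V}) (F : {set E}) (s t : V) : Prop :=
  exists (vs : seq V) (es : seq E),
    [/\ size vs = (size es).+1, uniq vs /\ uniq es,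
        nth s vs 0 = s /\ last s vs = t,
        (forall i (e0 : E) (x0 : V), i < size es ->
            joins (nth e0 es i) (nth x0 vs i) (nth x0 vs i.+1)) &
        A = [set x in vs] /\ F = [set e in es]].

End Defs.

(* Main.v *)
Require Import Defs.
From mathcomp Require Import all_boot.
Set Implicit Arguments. Unset Strict Implicit. Unset Printing Implicit Defensive.

Lemma joins_sym (G : mgraph) (e : edge G) x y : joins e x y = joins e y x.
Proof. by rewrite /joins orbC. Qed.

Lemma ttspg_ends (G : mgraph) A F (s t : vert G) :
  ttspg A F s t -> [/\ s \in A, t \in A & s != t].
Proof.
elim=> {A F s t}.
- move=> e s t /orP[/andP[/eqP<- /eqP<-]|/andP[/eqP<- /eqP<-]];
  rewrite !inE !eqxx ?orbT; split=> //; first exact: noloop.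
  by rewrite eq_sym; apply: noloop.
- move=> A1 F1 s1 t1 A2 F2 s2 t2 _ [s1A1 t1A1 n1] _ [s2A2 t2A2 n2] e I _.
  split; rewrite ?inE ?s2A2 ?t1A1 ?orbT //.
  apply/eqP=> E; have: s2 \in A1 :&: A2 by rewrite inE s2A2 E t1A1.
  by rewrite I inE -e => /eqP E2; rewrite E2 eqxx in n2.
- move=> A1 F1 A2 F2 s t _ [sA tA n] _ _ _ _.
  by rewrite !inE sA tA.
Qed.

Lemma ttspg_edges (G : mgraph) A F (s t : vert G) :
  ttspg A F s t -> forall e, e \in F -> src e \in A /\ tgt e \in A.
Proof.
elim=> {A F s t}.
- move=> e s t J f; rewrite inE => /eqP->.
  by case/orP: J => /andP[/eqP-> /eqP->]; rewrite !inE !eqxx ?orbT.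
- move=> A1 F1 s1 t1 A2 F2 s2 t2 _ H1 _ H2 _ _ _ f.
  rewrite !inE => /orP[/H1|/H2] [-> ->]; by rewrite ?orbT.
- move=> A1 F1 A2 F2 s t _ H1 _ H2 _ _ f.
  rewrite !inE => /orP[/H1|/H2] [-> ->]; by rewrite ?orbT.
Qed.

Lemma ttspg_sym (G : mgraph) A F (s t : vert G) :
  ttspg A F s t -> ttspg A F t s.
Proof.
elim=> {A F s t}.
- move=> e s t J; rewrite setUC; apply: ttspg_edge; by rewrite joins_sym.
- move=> A1 F1 s1 t1 A2 F2 s2 t2 _ H1 _ H2 e I D.
  rewrite setUC [F1 :|: _]setUC.
  apply: (ttspg_series H2 H1) => //; first by rewrite setIC I e.
  by rewrite disjoint_sym.
- move=> A1 F1 A2 F2 s t _ H1 _ H2 I D.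
  by apply: ttspg_parallel => //; rewrite I setUC.
Qed.

Lemma joins_neq (G : mgraph) (e : edge G) s t : joins e s t -> s != t.
Proof.
case/orP=> /andP[/eqP<- /eqP<-]; first exact: noloop.
by rewrite eq_sym; apply: noloop.
Qed.

Lemma path_edge (G : mgraph) (e : edge G) s t :
  joins e s t -> is_path [set s; t] [set e] s t.
Proof.
move=> J; exists [:: s; t], [:: e]; split=> //.
- split=> //=; rewrite andbT inE; exact: joins_neq J.
- by move=> [|i] e0 x0 //.
- by split; apply/setP=> x; rewrite !inE ?orbF.
Qed.

Lemma path_ne (G : mgraph) A F (s t : vert G) :
  is_path A F s t -> s != t -> F != set0.
Proof.
move=> [vs [es [Hs _ [H0 Hl] _ [_ ->]]]] n.
case: es Hs => [|e es] Hs.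
  case: vs Hs H0 Hl => [|a [|b r]] //= _ E1 E2; by rewrite -E1 -E2 eqxx in n.
apply/set0Pn; exists e; by rewrite inE mem_head.
Qed.

Lemma path_cat (G : mgraph) A1 F1 A2 F2 (s1 t1 s2 : vert G) :
  is_path A1 F1 s1 t1 -> is_path A2 F2 s2 s1 ->
  A1 :&: A2 = [set s1] -> [disjoint F1 & F2] ->
  is_path (A1 :|: A2) (F1 :|: F2) s2 t1.
Proof.
move=> [vs1 [es1 [S1 [U1 V1] [H1 L1] J1 [-> ->]]]].
move=> [vs2 [es2 [S2 [U2 V2] [H2 L2] J2 [-> ->]]]] I D.
set n := size es2.
have lastv2 : nth s2 vs2 n = s1.
  by rewrite -L2 (last_nth s2) S2.
have dropv2 : drop n vs2 = [:: s1].
  rewrite (drop_nth s2); last by rewrite S2.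
  by rewrite lastv2 drop_oversize // S2.

exists (take n vs2 ++ vs1), (es2 ++ es1); split.
- rewrite size_cat size_takel; last by rewrite S2.
  by rewrite S1 size_cat addnS.
- split; last first.
    rewrite cat_uniq V1 V2 andbT /=; apply/hasPn=> e e1; apply/negP=> e2.
    by move: (disjointFr D (x:=e)); rewrite !inE e1 e2 => /(_ isT).
  rewrite cat_uniq U1 take_uniq // andbT; apply/hasPn=> x xv1; apply/negP=> xv2.
  have: x \in [set x in vs1] :&: [set x in vs2].
    by rewrite !inE xv1 (mem_take xv2).
  rewrite I inE => /eqP Ex; subst x.
  move: U2; rewrite -(cat_take_drop n vs2) dropv2 cat_uniq /= => /and3P[_ /norP[]].
  by rewrite xv2.
- split.
  + have [n0|npos] := posnP n.
      rewrite n0 take0 /= (set_nth_default s1) ?S1 // H1.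
      by rewrite n0 in lastv2; rewrite -lastv2 H2.
    rewrite nth_cat (size_takel (_ : n <= size vs2)); last by rewrite S2.
    by rewrite npos nth_take.
  + rewrite last_cat; case: vs1 S1 L1 {U1 J1 H1 I} => [|a r] //=.
- move=> i e0 x0; rewrite size_cat => Hi.
  rewrite nth_cat -/n.
  have St : size (take n vs2) = n by rewrite size_takel // S2.
  rewrite !nth_cat St.
  case: (ltnP i n) => Hin.
    rewrite nth_take //.
    case: (ltnP i.+1 n) => Hin2; first by rewrite nth_take //; apply: J2.
    have Ei : i.+1 = n by apply/eqP; rewrite eqn_leq Hin Hin2.
    rewrite Ei subnn.
    have -> : nth x0 vs1 0 = nth x0 vs2 i.+1.
      rewrite (set_nth_default s1 x0 (_ : 0 < size vs1)); last by rewrite S1.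
      rewrite H1 (set_nth_default s2 x0 (_ : i.+1 < size vs2)); last by rewrite S2 Ei.
      by rewrite Ei lastv2.
    by apply: J2.
  rewrite ltnNge (leqW Hin) /= subSn //.
  by apply: J1; rewrite (ltn_subLR _ Hin).
- split; apply/setP=> x; rewrite !inE mem_cat; last by rewrite orbC.
  rewrite -{1}(cat_take_drop n vs2) mem_cat dropv2 inE.
  have s1v1 : s1 \in vs1 by rewrite -{1}H1 mem_nth // S1.
  case: eqP => [->|_]; first by rewrite s1v1 !orbT.
  by rewrite orbF orbC.
Qed.

Lemma I1P (T : finType) (A B : {set T}) a x :
  A :&: B = [set a] -> x \in A -> x \in B -> x = a.
Proof. by move=> E xA xB; apply/eqP; rewrite -in_set1 -E inE xA xB. Qed.

Lemma I2P (T : finType) (A B : {set T}) a b x :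
  A :&: B = [set a; b] -> x \in A -> x \in B -> x = a \/ x = b.
Proof.
by move=> E xA xB; have := xA; rewrite -(andbT (x \in A)) -xB -in_setI E !inE => /orP[]/eqP; [left|right].
Qed.

Lemma mkI1 (T : finType) (A B : {set T}) a :
  a \in A -> a \in B -> (forall x, x \in A -> x \in B -> x = a) -> A :&: B = [set a].
Proof.
move=> aA aB H; apply/setP=> x; rewrite !inE.
apply/andP/eqP=> [[]|->]; [exact: H | by split].
Qed.

Lemma mkI2 (T : finType) (A B : {set T}) a b :
  a \in A -> a \in B -> b \in A -> b \in B ->
  (forall x, x \in A -> x \in B -> x = a \/ x = b) -> A :&: B = [set a; b].
Proof.
move=> aA aB bA bB H; apply/setP=> x; rewrite !inE.
apply/andP/orP=> [[xA xB]|[]/eqP->] //; by case: (H x xA xB) => ->; rewrite eqxx ?orbT; [left|right].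
Qed.

Lemma disjP (T : finType) (A B : {set T}) x :
  [disjoint A & B] -> x \in A -> x \in B -> False.
Proof. by move=> D xA; rewrite (disjointFr D xA). Qed.

Lemma mkdisj (T : finType) (A B : {set T}) :
  (forall x, x \in A -> x \in B -> False) -> [disjoint A & B].
Proof.
move=> H; rewrite -setI_eq0; apply/eqP/setP=> x; rewrite !inE.
by apply/negP=> /andP[/H]; apply.
Qed.

Lemma inI1 (T : finType) (A B : {set T}) a : A :&: B = [set a] -> a \in A /\ a \in B.
Proof. move=> E; have : a \in A :&: B by rewrite E set11. by rewrite inE => /andP. Qed.

Lemma inI2 (T : finType) (A B : {set T}) a b : A :&: B = [set a; b] ->
  [/\ a \in A, a \in B, b \in A & b \in B].
Proof.
move=> E; have : a \in A :&: B by rewrite E set21.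
have : b \in A :&: B by rewrite E set22.
by rewrite !inE => /andP[-> ->] /andP[-> ->].
Qed.

Lemma ser1_sets (T : finType) (A1 A2 Ax : {set T}) s1 t1 s2 :
  A1 :&: A2 = [set s1] -> (A1 :|: A2) :&: Ax = [set s2; t1] ->
  t1 \in A1 -> s1 != t1 -> s1 \in A2 -> s2 \in A2 -> s2 != s1 ->
  Ax :&: A2 = [set s2] /\ A1 :&: (Ax :|: A2) = [set s1; t1].
Proof.
move=> I E t1A1 n1 s1A2 s2A2 n2.
have [_ s2x _ t1x] := inI2 E.
have [s1A1 _] := inI1 I.
split.
  apply: mkI1 => // x xx xA2.
  case: (I2P E (x:=x)) => //; first by rewrite inE xA2 orbT.
  move=> ex; subst x; have := I1P I t1A1 xA2 => ee; by rewrite ee eqxx in n1.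
apply: mkI2; rewrite ?inE ?s1A1 ?t1A1 ?s1A2 ?t1x ?orbT // => x xA1.
rewrite inE => /orP[] xx; last by left; apply: (I1P I).
case: (I2P E (x:=x)) => //; first by rewrite inE xA1.
move=> ex; subst x; by rewrite (I1P I xA1 s2A2) eqxx in n2.
by right.
Qed.

Lemma ser2_sets (T : finType) (A1 A2 Ax : {set T}) s1 t1 s2 :
  A1 :&: A2 = [set s1] -> (A1 :|: A2) :&: Ax = [set s2; t1] ->
  t1 \in A1 -> s1 != t1 -> s1 \in A2 -> s2 \in A2 -> s2 != s1 ->
  A1 :&: Ax = [set t1] /\ A2 :&: (A1 :|: Ax) = [set s2; s1].
Proof.
move=> I E t1A1 n1 s1A2 s2A2 n2.
have [_ s2x _ t1x] := inI2 E.
have [s1A1 _] := inI1 I.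
split.
  apply: mkI1 => // x xA1 xx.
  case: (I2P E (x:=x)) => //; first by rewrite inE xA1.
  move=> ex; subst x; by rewrite (I1P I xA1 s2A2) eqxx in n2.
apply: mkI2; rewrite ?inE ?s1A1 ?s2x ?s1A2 ?s2A2 ?orbT // => x xA2.
rewrite inE => /orP[] xx; first by right; apply: (I1P I).
case: (I2P E (x:=x)) => //; first by rewrite inE xA2 orbT.
  by left.
move=> ex; subst x; have := I1P I t1A1 xA2 => ee; by rewrite ee eqxx in n1.
Qed.

Lemma par_sets (T : finType) (A1 A2 Ax : {set T}) s t :
  A1 :&: A2 = [set s; t] -> (A1 :|: A2) :&: Ax = [set s; t] ->
  A2 :&: Ax = [set s; t] /\ A1 :&: (A2 :|: Ax) = [set s; t].
Proof.
move=> I E.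
have [sA1 sA2 tA1 tA2] := inI2 I.
have [_ sx _ tx] := inI2 E.
split.
  apply: mkI2 => // x xA2 xx; apply: (I2P E) => //; by rewrite inE xA2 orbT.
apply: mkI2; rewrite ?inE ?sA1 ?tA1 ?sA2 ?tA2 // => x xA1.
rewrite inE => /orP[] xx; first exact: (I2P I).
by apply: (I2P E) => //; rewrite inE xA1.
Qed.

Lemma disj3 (T : finType) (F1 F2 Fx : {set T}) :
  [disjoint F1 & F2] -> [disjoint F1 :|: F2 & Fx] ->
  [/\ [disjoint Fx & F2], [disjoint F1 & Fx :|: F2],
      [disjoint F1 & Fx], [disjoint F2 & F1 :|: Fx] & [disjoint F2 & Fx]].
Proof.
move=> D1 D2.
have H1 : forall x, x \in F1 -> x \in F2 -> False by move=> x; apply: disjP.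
have H2 : forall x, x \in F1 :|: F2 -> x \in Fx -> False by move=> x; apply: disjP.
split; apply: mkdisj => x; rewrite ?inE.
- by move=> xx xF2; apply: (H2 x) => //; rewrite inE xF2 orbT.
- move=> xF1 /orP[] xx; last exact: H1 xF1 xx.
  by apply: (H2 x) => //; rewrite inE xF1.
- by move=> xF1 xx; apply: (H2 x) => //; rewrite inE xF1.
- move=> xF2 /orP[] xx; first exact: H1 xx xF2.
  by apply: (H2 x) => //; rewrite inE xF2 orbT.
- by move=> xx xF2; apply: (H2 x) => //; rewrite inE xx orbT.
Qed.

Ltac setU_tac := apply/setP=> ?; rewrite !inE;
  repeat match goal with |- context[?x \in ?A] => case: (x \in A) end; by [].

Definition good (G : mgraph) (A : {set vert G}) (F : {set edge G}) (s t : vert G) : Prop :=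
  exists (u v : vert G) (B1 B2 : {set vert G}) (K1 K2 : {set edge G}),
  [/\ is_path B1 K1 u v, is_path B2 K2 u v, K1 != K2,
      B1 :&: B2 = [set u; v] /\ [disjoint K1 & K2] &
      forall A2 F2, ttspg A2 F2 s t -> A :&: A2 = [set s; t] -> [disjoint F & F2] ->
        exists A3 F3, [/\ ttspg A3 F3 u v,
          B1 :&: A3 = [set u; v] /\ B2 :&: A3 = [set u; v],
          [disjoint K1 & F3] /\ [disjoint K2 & F3],
          B1 :|: B2 :|: A3 = A :|: A2 & K1 :|: K2 :|: F3 = F :|: F2]].

Lemma good_transfer (G : mgraph) (A : {set vert G}) (F : {set edge G}) (s t : vert G)
  (A' : {set vert G}) (F' : {set edge G}) (s' t' : vert G) :
  good A F s t ->
  (forall A2 F2, ttspg A2 F2 s' t' -> A' :&: A2 = [set s'; t'] -> [disjoint F' & F2] ->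
     exists Ax Fx, [/\ ttspg Ax Fx s t, A :&: Ax = [set s; t], [disjoint F & Fx],
        A :|: Ax = A' :|: A2 & F :|: Fx = F' :|: F2]) ->
  good A' F' s' t'.
Proof.
move=> [u [v [B1 [B2 [K1 [K2 [P1 P2 n [I D] f]]]]]]] T.
exists u, v, B1, B2, K1, K2; split=> // A2 F2 H I2 D2.
have [Ax [Fx [Hx Ix Dx EA EF]]] := T _ _ H I2 D2.
have [A3 [F3 [H3 I3 D3 EA3 EF3]]] := f _ _ Hx Ix Dx.
exists A3, F3; split=> //; by rewrite ?EA3 ?EF3.
Qed.

Lemma main_lemma (G : mgraph) A F (s t : vert G) :
  ttspg A F s t -> is_path A F s t \/ good A F s t.
Proof.
elim=> {A F s t}.
- move=> e s t J; left; exact: path_edge.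
- move=> A1 F1 s1 t1 A2 F2 s2 t2 H1 IH1 H2 IH2 e I D; subst t2.
  have [s1A1 t1A1 n1] := ttspg_ends H1.
  have [s2A2 s1A2 n2] := ttspg_ends H2.
  case: IH1 => [P1|G1].
  + case: IH2 => [P2|G2].
    * left; exact: path_cat P1 P2 I D.
    * right; apply: (good_transfer G2) => Ax Fx Hx Ix Dx.
      have [Ia Ib] := ser2_sets I Ix t1A1 n1 s1A2 s2A2 n2.
      have [d1 d2 d3 d4 d5] := disj3 D Dx.
      exists (A1 :|: Ax), (F1 :|: Fx); split => //; last 2 first.
      - setU_tac.
      - setU_tac.
      exact: (ttspg_series (ttspg_sym H1) Hx).
  + right; apply: (good_transfer G1) => Ax Fx Hx Ix Dx.
    have [Ia Ib] := ser1_sets I Ix t1A1 n1 s1A2 s2A2 n2.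
    have [d1 d2 d3 d4 d5] := disj3 D Dx.
    exists (Ax :|: A2), (Fx :|: F2); split => //; last 2 first.
    - setU_tac.
    - setU_tac.
    exact: (ttspg_series Hx (ttspg_sym H2)).
- move=> A1 F1 A2 F2 s t H1 IH1 H2 IH2 I D.
  have [sA1 tA1 n] := ttspg_ends H1.
  have I' : A2 :&: A1 = [set s; t] by rewrite setIC.
  have D' : [disjoint F2 & F1] by rewrite disjoint_sym.
  case: IH1 => [P1|G1].
  + case: IH2 => [P2|G2].
    * right; exists s, t, A1, A2, F1, F2; split => //.
        apply/eqP=> E; rewrite -E in D.
        move: (path_ne P1 n); have := disjoint_setI0 D; rewrite setIid => ->.
        by rewrite eqxx.
      move=> Ax Fx Hx Ix Dx.
      have [Ia Ib] := par_sets I Ix.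
      have Ix' : (A2 :|: A1) :&: Ax = [set s; t] by rewrite setUC.
      have [Ic _] := par_sets I' Ix'.
      have [d1 d2 d3 d4 d5] := disj3 D Dx.
      by exists Ax, Fx; split.
    * right; apply: (good_transfer G2) => Ax Fx Hx Ix Dx.
      have Ix' : (A2 :|: A1) :&: Ax = [set s; t] by rewrite setUC.
      have [Ic Id] := par_sets I' Ix'.
      have [d1 d2 d3 d4 d5] := disj3 D Dx.
      exists (A1 :|: Ax), (F1 :|: Fx); split => //; last 2 first.
      - setU_tac.
      - setU_tac.
      exact: (ttspg_parallel H1 Hx).
  + right; apply: (good_transfer G1) => Ax Fx Hx Ix Dx.
    have [Ia Ib] := par_sets I Ix.
    have [d1 d2 d3 d4 d5] := disj3 D Dx.
    exists (A2 :|: Ax), (F2 :|: Fx); split => //; last 2 first.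
    - setU_tac.
    - setU_tac.
    + exact: (ttspg_parallel H2 Hx).
    + by rewrite setUC.
Qed.

Lemma seq_ttspg (G : mgraph) (es : seq (edge G)) : forall (vs : seq (vert G)) s t,
  0 < size es -> size vs = (size es).+1 -> uniq vs -> uniq es -> nth s vs 0 = s -> last s vs = t ->
  (forall i (e0 : edge G) (x0 : vert G), i < size es ->
      joins (nth e0 es i) (nth x0 vs i) (nth x0 vs i.+1)) ->
  ttspg [set x in vs] [set e in es] s t.
Proof.
elim: es => [|e es IH] // [|a [|x r]] s t //= _ Sz Uv Ue H0 Hl J.
have J0 := J 0 e s isT; rewrite /= H0 in J0.
subst a.
case: es IH Sz Ue J => [|e' es'] IH Sz Ue J.
  case: r Sz Uv Hl J => // _ Uv Hl J; subst t.
  have -> : [set y in [:: s; x]] = [set s; x] by apply/setP=> y; rewrite !inE ?orbF.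
  have -> : [set y in [:: e]] = [set e] by apply/setP=> y; rewrite !inE ?orbF.
  exact: ttspg_edge.
have T := IH (x :: r) x t.
move: Uv Ue => /= /andP[sn Uv] /andP[en Ue].
have T2 : ttspg [set y in x :: r] [set f in e' :: es'] x t.
  apply: T => //.
    by case: Sz => /= ->.
  by move=> i e0 x0 Hi; apply: (J i.+1 e0 x0).
have -> : [set y in [:: s, x & r]] = [set y in x :: r] :|: [set s; x].
  by apply/setP=> y; rewrite !inE; case: (y == s); case: (y == x); case: (y \in r).
have -> : [set f in [:: e, e' & es']] = [set f in e' :: es'] :|: [set e].
  apply/setP=> y; rewrite !inE; case: (y == e); case: (y == e'); case: (y \in es'); by [].
apply: (ttspg_series T2 (ttspg_edge J0)) => //.
  apply: mkI1; rewrite ?inE ?eqxx ?orbT // => y; rewrite !inE => yr /orP[]/eqP ey; subst y => //.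
  by move: sn; rewrite inE yr.
apply: mkdisj => y; rewrite !inE => yr /eqP ye; subst y.
by move: en; rewrite inE yr.
Qed.

Lemma path_ttspg (G : mgraph) A F (s t : vert G) :
  is_path A F s t -> s != t -> ttspg A F s t.
Proof.
move=> [vs [es [S [U V] [H L] J [-> ->]]]] n; apply: seq_ttspg => //.
case: es S J {V} => // S J; case: vs S H L U J => [|a [|b r]] // _ /= E1 E2.
by rewrite -E1 -E2 eqxx in n.
Qed.

Lemma path_disj_neq (G : mgraph) (A1 : {set vert G}) (F1 : {set edge G}) (F2 : {set edge G}) (s t : vert G) :
  is_path A1 F1 s t -> s != t -> [disjoint F1 & F2] -> F1 != F2.
Proof.
move=> P1 n D; apply/eqP=> E; rewrite -E in D.
move: (path_ne P1 n); have := disjoint_setI0 D; rewrite setIid => ->.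
by rewrite eqxx.
Qed.

Definition concl (G : mgraph) : Prop :=
  exists s t : vert G, s != t /\ ttspg setT setT s t /\
    exists (A1 A2 : {set vert G}) (F1 F2 : {set edge G}),
      [/\ is_path A1 F1 s t, is_path A2 F2 s t, F1 != F2 &
        ([/\ A1 :&: A2 = [set s; t], [disjoint F1 & F2],
             A1 :|: A2 = setT & F1 :|: F2 = setT]
        \/
        exists (A3 : {set vert G}) (F3 : {set edge G}),
          [/\ ttspg A3 F3 s t,
              A1 :&: A2 = [set s; t] /\ A1 :&: A3 = [set s; t] /\
              A2 :&: A3 = [set s; t],
              [disjoint F1 & F2] /\ [disjoint F1 & F3] /\ [disjoint F2 & F3],
              A1 :|: A2 :|: A3 = setT & F1 :|: F2 :|: F3 = setT])].

Lemma finish_good (G : mgraph) (A : {set vert G}) (F : {set edge G}) (A2 : {set vert G}) (F2 : {set edge G}) (s t : vert G) :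
  good A F s t -> ttspg A2 F2 s t -> A :&: A2 = [set s; t] -> [disjoint F & F2] ->
  A :|: A2 = setT -> F :|: F2 = setT -> concl G.
Proof.
move=> [u [v [B1 [B2 [K1 [K2 [P1 P2 nK [IB DB] f]]]]]]] H2 I D EA EF.
have [A3 [F3 [H3 [I13 I23] [D13 D23] EA3 EF3]]] := f _ _ H2 I D.
have [uA3 vA3 n] := ttspg_ends H3.
exists u, v; split => //; split.
  rewrite -EA -EF -EA3 -EF3.
  apply: ttspg_parallel => //.
  - exact: ttspg_parallel (path_ttspg P1 n) (path_ttspg P2 n) IB DB.
  - by rewrite setIUl I13 I23 setUid.
  - apply: mkdisj => x; rewrite inE => /orP[] xK xF; [exact: disjP D13 xK xF | exact: disjP D23 xK xF].
exists B1, B2, K1, K2; split => //; right; exists A3, F3; split => //.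
  by rewrite EA3.
by rewrite EF3.
Qed.

Lemma top_case (G : mgraph) A F (s t : vert G) :
  ttspg A F s t -> A = setT -> F = setT ->
  (forall v : vert G, connected_on (~: [set v])) ->
  ~ (#|vert G| = 2 /\ #|edge G| = 1) -> concl G.
Proof.
case=> {A F s t}.
- move=> e s t J EA EF _ []; split.
    by rewrite -cardsT -EA cards2 (joins_neq J).
  by rewrite -cardsT -EF cards1.
- move=> A1 F1 s1 t1 A2 F2 s2 t2 H1 H2 e I D EA EF Hc _; subst t2.
  have [s1A1 t1A1 n1] := ttspg_ends H1.
  have [s2A2 s1A2 n2] := ttspg_ends H2.
  have cl : closed (adj_on (~: [set s1])) A1.
    move=> x y /and3P[]; rewrite !inE => xn yn /existsP[f Jf].
    have : f \in F1 :|: F2 by rewrite EF inE.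
    rewrite inE => /orP[] fF.
      have [sA tA] := ttspg_edges H1 fF.
      by case/orP: Jf => /andP[/eqP<- /eqP<-]; rewrite sA tA.
    have [sA tA] := ttspg_edges H2 fF.
    have [xA2 yA2] : x \in A2 /\ y \in A2 by case/orP: Jf => /andP[/eqP<- /eqP<-].
    case xA1 : (x \in A1); first by rewrite (I1P I xA1 xA2) eqxx in xn.
    case yA1 : (y \in A1); first by rewrite (I1P I yA1 yA2) eqxx in yn.
    by [].
  have t1B : t1 \in ~: [set s1] by rewrite !inE eq_sym.
  have s2B : s2 \in ~: [set s1] by rewrite !inE.
  have := closed_connect cl (Hc s1 t1 s2 t1B s2B).
  rewrite t1A1.
  case s2A1 : (s2 \in A1); first by rewrite (I1P I s2A1 s2A2) eqxx in n2.
  by [].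
- move=> A1 F1 A2 F2 s t H1 H2 I D EA EF _ _.
  have [sA1 tA1 n] := ttspg_ends H1.
  case: (main_lemma H1) => [P1|G1]; last exact: finish_good G1 H2 I D EA EF.
  case: (main_lemma H2) => [P2|G2]; last first.
    apply: (finish_good G2 H1).
    - by rewrite setIC.
    - by rewrite disjoint_sym.
    - by rewrite setUC.
    - by rewrite setUC.
  exists s, t; split => //; split; first by rewrite -EA -EF; exact: ttspg_parallel.
  exists A1, A2, F1, F2; split => //; first exact: path_disj_neq P1 n D.
  by left.
Qed.

Theorem mainTheorem1 (G : mgraph) :
  two_connected G -> series_parallel G ->
  ~ (#|vert G| = 2 /\ #|edge G| = 1) ->
  exists s t : vert G, s != t /\ ttspg setT setT s t /\
    exists (A1 A2 : {set vert G}) (F1 F2 : {set edge G}),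
      [/\ is_path A1 F1 s t, is_path A2 F2 s t, F1 != F2 &
        (* H absent: (G,s,t) = (P1,s,t) || (P2,s,t) *)
        ([/\ A1 :&: A2 = [set s; t], [disjoint F1 & F2],
             A1 :|: A2 = setT & F1 :|: F2 = setT]
        \/
        (* H present: (G,s,t) = (P1,s,t) || (P2,s,t) || (H,s,t) *)
        exists (A3 : {set vert G}) (F3 : {set edge G}),
          [/\ ttspg A3 F3 s t,
              A1 :&: A2 = [set s; t] /\ A1 :&: A3 = [set s; t] /\
              A2 :&: A3 = [set s; t],
              [disjoint F1 & F2] /\ [disjoint F1 & F3] /\ [disjoint F2 & F3],
              A1 :|: A2 :|: A3 = setT & F1 :|: F2 :|: F3 = setT])].
Proof.
move=> [_ Hc] [s [t H]] Hn.
exact: (top_case H (erefl _) (erefl _) Hc Hn).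
Qed.
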